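(* Let Assumptions (H), (R) and (F) hold, let $X$ be a local diffusion generated by $\mathcal A_t$ on $D$, and let $\Gamma$ be its local transition density on $D$ (a non-negative measurable function $\Gamma(t,x;T,y)$, $0<t<T<T_0$, $x\in\mathbb R^d$, $y\in D$, with $p(t,x;T,A)=\int_A\Gamma(t,x;T,y)dy$ for Borel $A\subseteq D$, continuous in $y\in D$ and bounded on compact subsets of $D$ uniformly in $x\in\mathbb R^d$). Then for all $0<t<T<T_0$ and $\xi\in D$, the function $x\mapsto\Gamma(t,x;T,\xi)$ is bounded and Borel measurable on $\mathbb R^d$, and $$\Gamma(t,x;T,\xi)=E_{t,x}\big[\Gamma(s,X_s;T,\xi)\big],\qquad t<s<T,\ x\in\mathbb R^d.$$
   Context: Fix $T_0>0$, integers $1\le p_0\le d$, a real $d\times d$ matrix $B$, $Y:=\langle Bx,\nabla_x\rangle+\partial_t$. Assumption (H): $\mathrm{rank}\,\mathrm{Lie}(\partial_{x_1},\dots,\partial_{x_{p_0}},Y)=d$. Intrinsic Hölder spaces $C^{n,\alpha}_B(Q)$ for a domain $Q\subseteq\mathbb R^{1+d}$: with $e^{\delta\partial_{x_i}}(t,x)=(t,x+\delta e_i)$, $e^{\delta Y}(t,x)=(t+\delta,e^{\delta B}x)$, $\delta_{(t,x)}$ the sup of $\bar\delta\in]0,1]$ with these points in $Q$ for $|\delta|\le\bar\delta$, $\delta_V=\inf_V\delta_{(t,x)}$; $f\in C^{\alpha_1}_{\partial_{x_i}}(Q)$ (resp. $C^{\alpha_2}_Y(Q)$) if $\sup_{V,0<|\delta|<\delta_V}|f(e^{\delta\partial_{x_i}}(t,x))-f(t,x)|/|\delta|^{\alpha_1}$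 (resp. $|f(e^{\delta Y}(t,x))-f(t,x)|/|\delta|^{\alpha_2/2}$) is finite for every $V\Subset Q$. $C^{0,\alpha}_B=C^\alpha_Y\cap\bigcap_{i\le p_0}C^\alpha_{\partial_{x_i}}$; $C^{1,\alpha}_B$: $f\in C^{1+\alpha}_Y$, $\partial_{x_i}f\in C^{0,\alpha}_B$; $n\ge2$: Lie derivative $Yf$ exists in $C^{n-2,\alpha}_B$ and $\partial_{x_i}f\in C^{n-1,\alpha}_B$ ($i\le p_0$). Markov setting. $X=(X_s)_{s\in[0,T_0[}$ is a continuous strong Markov process on $(\Omega,\mathcal F,(\mathcal F^t_T),(P_{t,x}))$ with transition probability $p(t,x;T,d\xi)$; $E_{t,x}$ is $P_{t,x}$-expectation. $\lim_{T-t\to0^+}$ means the common value of $\lim_{h\to0^+}f(t,t+h)$ and $\lim_{h\to0^+}f(t-h,t)$. $D$ is a domain, $a_{ij}=a_{ji},a_i\in L^\infty_{loc}([0,T_0[\times D)$, $\mathcal A_t=\frac12\sum_{i,j\le p_0}a_{ij}\partial_{x_ix_j}+\sum_{i\le p_0}a_i\partial_{x_i}+\langle Bx,\nabla_x\rangle$. $X$ is a local diffusion generated by $\mathcal A_t$ on $D$ if for all $t\in[0,T_0[$, $\delta>0$, compact $H\subset D$: [Lim-i] $\frac1{T-t}p(t,x;T,\{|\xi-x|>\delta\}\cap H)\to0$ uniformly in $x\in\mathbb R^d$ and $\frac1{T-t}p(t,x;T,\{|\xi-x|>\delta\})\to0$ uniformly in $x\in H$; [Lim-ii] uniformly in $x\in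 H$, $\frac1{T-t}\int_{|\xi-x|<\delta}(\xi-x)_ip(t,x;T,d\xi)\to a_i(t,x)+(Bx)_i$ ($i\le p_0$), $\to(Bx)_i$ ($i>p_0$); $\frac1{T-t}\int_{|\xi-x|<\delta}(\xi-x)_i(\xi-x)_jp(t,x;T,d\xi)\to a_{ij}(t,x)$ ($i,j\le p_0$), $\to0$ otherwise. Assumption (R): there are $N\in\mathbb N_0$, $\alpha\in]0,1]$, $M>0$ with $a_{ij},a_i\in C^{N,\alpha}_B(]0,T_0[\times D)$, all Lie derivatives bounded by $M$, and $M^{-1}|\xi|^2\le\sum_{i,j\le p_0}a_{ij}(t,x)\xi_i\xi_j\le M|\xi|^2$ on $]0,T_0[\times D$. Assumption (F): for every $T\in]0,T_0[$ and every bounded continuous $\varphi$ on $\mathbb R^d$, $(t,x)\mapsto E_{t,x}[\varphi(X_T)]$ is continuous on $]0,T[\times D$. *)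

(* Defs.v *)
From HB Require Import structures.
From mathcomp Require Import all_boot all_order all_algebra.
From mathcomp Require Import all_classical all_reals all_analysis.

Set Implicit Arguments.
Unset Strict Implicit.
Unset Printing Implicit Defensive.

Import Order.TTheory GRing.Theory Num.Theory.
Import numFieldNormedType.Exports.

Local Open Scope classical_set_scope.
Local Open Scope ring_scope.

(* Conventions.  Points of R^d are row vectors 'rV[R]_d (with the library's  *)
(* topology).  Points of R^{1+d} are pairs (t, x) : R * 'rV[R]_d.  The       *)
(* column-vector expression  B x  of the paper is the row  x *m B^T.          *)
(* Coordinates are 0-based: x_1, ..., x_{p0} of the paper are the indices    *)
(* i : 'I_d with i < p0.                                                     *)

Section Defs.
Variable R : realType.

Definition borel_set (T : topologicalType) (A : set T) : Prop :=
  <<s [set: T], open >> A.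

Definition borel_on (T : topologicalType) (Dom : set T) (f : T -> R) : Prop :=
  forall A : set R, borel_set A -> borel_set (Dom `&` f @^-1` A).

Definition eucl (d : nat) (x : 'rV[R]_d) : R :=
  Num.sqrt (\sum_(i < d) (x ord0 i) ^+ 2).

Definition Bx (d : nat) (B : 'M[R]_d) (x : 'rV[R]_d) : 'rV[R]_d := x *m B^T.

Definition expmx (d : nat) (A : 'M[R]_d) : 'M[R]_d :=
  lim ((fun n : nat => \sum_(k < n) ((k`!)%:R^-1 *: A ^+ k)) @ \oo).

(* Lebesgue integral on R^d of a [0,+oo]-valued function, as the iterated     *)
(* one-dimensional Lebesgue integral (Tonelli).                              *)
Fixpoint leb_int (n : nat) : ('rV[R]_n -> \bar R) -> \bar R :=
  match n with
  | 0 => fun f => f 0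
  | m.+1 => fun f =>
      (\int[@lebesgue_measure R]_y
         leb_int (fun z : 'rV[R]_m => f (row_mx (const_mx y : 'rV[R]_1) z)))%E
  end.

(* The vector fields involved are affine on R^{1+d}; an affine vector field   *)
(* z |-> a + z *m M  (z a row in R^{1+d}, index 0 = time, indices 1..d = x)   *)
(* is represented by the pair (a, M).  Affine vector fields form a Lie        *)
(* subalgebra of smooth vector fields, with bracket                           *)
(*   [V, W](z) = DW(z) V(z) - DV(z) W(z).                                     *)
Definition affvf (d : nat) := ('rV[R]_(1 + d) * 'M[R]_(1 + d))%type.

Definition affvf_eval (d : nat) (V : affvf d) (z : 'rV[R]_(1 + d)) : 'rV[R]_(1 + d) :=
  V.1 + z *m V.2.

Definition affvf_bracket (d : nat) (V W : affvf d) : affvf d :=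
  (V.1 *m W.2 - W.1 *m V.2, V.2 *m W.2 - W.2 *m V.2).

Definition vf_dx (d : nat) (i : 'I_d) : affvf d :=
  (delta_mx 0 (rshift 1 i), 0).

(* Y = <Bx, grad_x> + d/dt *)
Definition vf_Y (d : nat) (B : 'M[R]_d) : affvf d :=
  (delta_mx 0 (lshift d (ord0 : 'I_1)), block_mx 0 0 0 B^T).

Definition in_Lie (d p0 : nat) (B : 'M[R]_d) (V : affvf d) : Prop :=
  forall S : set (affvf d),
    (forall i : 'I_d, (i < p0)%N -> S (vf_dx i)) ->
    S (vf_Y B) ->
    (forall U W, S U -> S W -> S (U.1 + W.1, U.2 + W.2)) ->
    (forall (c : R) U, S U -> S (c *: U.1, c *: U.2)) ->
    (forall U W, S U -> S W -> S (affvf_bracket U W)) ->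
    S V.

(* rank Lie(...)(z) is maximal (= d+1) at every point z of R^{1+d}: the values *)
(* at z of the fields of the Lie algebra span R^{1+d}.                       *)
Definition hoermander (d p0 : nat) (B : 'M[R]_d) : Prop :=
  forall z w : 'rV[R]_(1 + d), exists V, in_Lie p0 B V /\ affvf_eval V z = w.

Definition exp_dx (d : nat) (i : 'I_d) (delta : R) (z : R * 'rV[R]_d) : R * 'rV[R]_d :=
  (z.1, z.2 + delta *: delta_mx 0 i).

Definition exp_Y (d : nat) (B : 'M[R]_d) (delta : R) (z : R * 'rV[R]_d) : R * 'rV[R]_d :=
  (z.1 + delta, z.2 *m (expmx (delta *: B))^T).

Section Hoelder.
Variables (d p0 : nat) (B : 'M[R]_d) (Q : set (R * 'rV[R]_d)).

Definition delta_admissible (z : R * 'rV[R]_d) (db : R) : Prop :=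
  0 < db <= 1 /\
  forall delta : R, `|delta| <= db ->
    (forall i : 'I_d, (i < p0)%N -> Q (exp_dx i delta z)) /\ Q (exp_Y B delta z).

Definition delta_pt (z : R * 'rV[R]_d) : R := sup (delta_admissible z).

Definition delta_set (V : set (R * 'rV[R]_d)) : R := inf (delta_pt @` V).

Definition cpt_in (V : set (R * 'rV[R]_d)) : Prop := compact V /\ V `<=` Q.

Definition C_dx (beta : R) (i : 'I_d) (f : R * 'rV[R]_d -> R) : Prop :=
  forall V, cpt_in V -> exists C : R, forall z delta, V z ->
    0 < `|delta| < delta_set V ->
    `|f (exp_dx i delta z) - f z| <= C * powR `|delta| beta.

Definition C_Y (beta : R) (f : R * 'rV[R]_d -> R) : Prop :=
  forall V, cpt_in V -> exists C : R, forall z delta, V z ->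
    0 < `|delta| < delta_set V ->
    `|f (exp_Y B delta z) - f z| <= C * powR `|delta| (beta / 2).

Definition C0B (alpha : R) (f : R * 'rV[R]_d -> R) : Prop :=
  C_Y alpha f /\ forall i : 'I_d, (i < p0)%N -> C_dx alpha i f.

Definition pdx (i : 'I_d) (f g : R * 'rV[R]_d -> R) : Prop :=
  forall z, Q z -> is_derive (0 : R) (1 : R) (fun h : R => f (exp_dx i h z)) (g z).

Definition lieY (f g : R * 'rV[R]_d -> R) : Prop :=
  forall z, Q z -> is_derive (0 : R) (1 : R) (fun h : R => f (exp_Y B h z)) (g z).

Definition bounded_by (M : R) (f : R * 'rV[R]_d -> R) : Prop :=
  forall z, Q z -> `|f z| <= M.

(* f in C^{n,alpha}_B(Q), with f and all the Lie derivatives occurring in the *)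
(* definition bounded by M on Q.                                              *)
Fixpoint CnB_M (alpha M : R) (n : nat) (f : R * 'rV[R]_d -> R) : Prop :=
  bounded_by M f /\
  match n with
  | 0 => C0B alpha f
  | n1.+1 =>
      match n1 with
      | 0 => C_Y (1 + alpha) f /\
             forall i : 'I_d, (i < p0)%N -> exists g, pdx i f g /\ CnB_M alpha M n1 g
      | m.+1 => (exists g, lieY f g /\ CnB_M alpha M m g) /\
             forall i : 'I_d, (i < p0)%N -> exists g, pdx i f g /\ CnB_M alpha M n1 g
      end
  end.

End Hoelder.

Section Markov.
Variables (d : nat) (T0 : R) (dO : measure_display) (Omega : measurableType dO).
Variables (F : R -> R -> set (set Omega)) (X : R -> Omega -> 'rV[R]_d)
          (P : R -> 'rV[R]_d -> probability Omega R).

Definition trans (t : R) (x : 'rV[R]_d) (T : R) (A : set 'rV[R]_d) : R :=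
  fine (P t x (X T @^-1` A)).

Definition Eval (t : R) (x : 'rV[R]_d) (T : R) (phi : 'rV[R]_d -> R) : R :=
  fine (\int[P t x]_w (phi (X T w))%:E)%E.

Definition stopping_time (t T : R) (tau : Omega -> R) : Prop :=
  (forall w, t <= tau w <= T) /\
  (forall s, t <= s <= T -> F t s [set w | tau w <= s]).

Definition F_tau (t T : R) (tau : Omega -> R) (A : set Omega) : Prop :=
  F t T A /\ forall s, t <= s <= T -> F t s (A `&` [set w | tau w <= s]).

Definition bdd_fun (phi : 'rV[R]_d -> R) : Prop :=
  exists C : R, forall y, `|phi y| <= C.

Definition cont_strong_Markov : Prop :=
  (forall t T, 0 <= t <= T -> T < T0 ->
     sigma_algebra [set: Omega] (F t T) /\ F t T `<=` measurable) /\
  (forall t s T, 0 <= t <= s -> s <= T -> T < T0 -> F t s `<=` F t T) /\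
  (forall t' t T, 0 <= t' <= t -> t <= T -> T < T0 -> F t T `<=` F t' T) /\
  (forall t s, 0 <= t <= s -> s < T0 ->
     forall A, borel_set A -> F t s (X s @^-1` A)) /\
  (forall w, {within [set s | 0 <= s < T0], continuous (fun s => X s w)}) /\
  (forall t x, 0 <= t < T0 -> P t x (X t @^-1` [set x]) = 1%E) /\
  (forall t T A, 0 <= t <= T -> T < T0 -> borel_set A ->
     borel_on [set: 'rV[R]_d] (fun x => trans t x T A)) /\
  (forall t T x (tau : Omega -> R) (phi : 'rV[R]_d -> R),
     0 <= t <= T -> T < T0 -> stopping_time t T tau ->
     borel_on [set: 'rV[R]_d] phi -> bdd_fun phi ->
     forall A, F_tau t T tau A ->
       (\int[P t x]_(w in A) (phi (X T w))%:E =
        \int[P t x]_(w in A) (Eval (tau w) (X (tau w) w) T phi)%:E)%E).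

Definition lim_TmT_unif (S : set 'rV[R]_d) (g : R -> R -> 'rV[R]_d -> R)
    (t : R) (l : 'rV[R]_d -> R) : Prop :=
  forall eps : R, 0 < eps -> exists eta : R, 0 < eta /\
    forall h : R, 0 < h < eta -> forall x, S x ->
      `|g t (t + h) x - l x| < eps /\
      (0 <= t - h -> `|g (t - h) t x - l x| < eps).

Definition moment1 (delta : R) (i : 'I_d) (t T : R) (x : 'rV[R]_d) : R :=
  fine (\int[P t x]_(w in [set w | (eucl (X T w - x) < delta)%R])
          ((X T w - x) ord0 i)%:E)%E.

Definition moment2 (delta : R) (i j : 'I_d) (t T : R) (x : 'rV[R]_d) : R :=
  fine (\int[P t x]_(w in [set w | (eucl (X T w - x) < delta)%R])
          ((X T w - x) ord0 i * (X T w - x) ord0 j)%:E)%E.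

Definition local_diffusion (p0 : nat) (B : 'M[R]_d) (D : set 'rV[R]_d)
    (a : 'I_d -> 'I_d -> R * 'rV[R]_d -> R) (b : 'I_d -> R * 'rV[R]_d -> R) : Prop :=
  forall t (delta : R) (H : set 'rV[R]_d),
    0 <= t < T0 -> 0 < delta -> compact H -> H `<=` D ->
    lim_TmT_unif [set: 'rV[R]_d]
      (fun t T x => (T - t)^-1 * trans t x T ([set y | eucl (y - x) > delta] `&` H))
      t (fun _ => 0) /\
    lim_TmT_unif H
      (fun t T x => (T - t)^-1 * trans t x T [set y | eucl (y - x) > delta])
      t (fun _ => 0) /\
    (forall i : 'I_d, lim_TmT_unif H
       (fun t T x => (T - t)^-1 * moment1 delta i t T x) t
       (fun x => if (i < p0)%N then b i (t, x) + Bx B x ord0 i else Bx B x ord0 i)) /\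
    (forall i j : 'I_d, lim_TmT_unif H
       (fun t T x => (T - t)^-1 * moment2 delta i j t T x) t
       (fun x => if (i < p0)%N && (j < p0)%N then a i j (t, x) else 0)).

End Markov.

End Defs.

(* Main.v *)
Require Import Defs.
From HB Require Import structures.
From mathcomp Require Import all_boot all_order all_algebra.
From mathcomp Require Import all_classical all_reals all_analysis.
From mathcomp Require Import measurable_realfun.
From mathcomp Require Import ring lra.
Import Order.TTheory GRing.Theory Num.Theory.
Import numFieldNormedType.Exports.
Local Open Scope classical_set_scope.
Local Open Scope ring_scope.
Section L1.
Variable R : realType.
Local Open Scope ereal_scope.

Lemma int_le0 d (T : measurableType d) (mu : {measure set T -> \bar R})
  (f g : T -> \bar R) : (forall x, 0 <= f x) -> (forall x, f x <= g x) ->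
  \int[mu]_x f x <= \int[mu]_x g x.
Proof.
move=> f0 fg.
rewrite !ge0_integralTE //; last by move=> x; exact: le_trans (f0 x) (fg x).
apply: ereal_sup_le => _ [h hf <-]; exists h => //= x.
exact: le_trans (hf x) (fg x).
Qed.

Lemma leb_int_ge0 n (f : 'rV[R]_n -> \bar R) : (forall y, 0 <= f y) ->
  0 <= leb_int f.
Proof.
elim: n f => [|n IH] f f0 /=; first exact: f0.
apply: integral_ge0 => y _; apply: IH => z; exact: f0.
Qed.

Lemma leb_int_le n (f g : 'rV[R]_n -> \bar R) : (forall y, 0 <= f y) ->
  (forall y, f y <= g y) -> leb_int f <= leb_int g.
Proof.
elim: n f g => [|n IH] f g f0 fg /=; first exact: fg.
apply: int_le0 => y; first by apply: leb_int_ge0 => z; exact: f0.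
by apply: IH => z; [exact: f0|exact: fg].
Qed.

End L1.
Section L2.
Variable R : realType.

Lemma ball_row_mx n (c : 'rV[R]_(1 + n)) (r : R) (y0 : R) (z : 'rV[R]_n) :
  ball c r (row_mx (const_mx y0 : 'rV[R]_1) z) <->
  ball (c ord0 (lshift n ord0)) r y0 /\ ball (rsubmx c) r z.
Proof.
rewrite /ball /= /mx_ball; split.
  move=> [r0 h]; split.
    by have := h ord0 (lshift n ord0); rewrite row_mxEl mxE.
  split => // i j; have := h i (rshift 1 j); rewrite row_mxEr mxE.
  by rewrite (ord1 i).
move=> [h1 [r0 h2]]; split => // i j; rewrite (ord1 i).
case: (splitP j) => [k jk|k jk].
  have -> : j = lshift n k by apply: val_inj.
  by rewrite row_mxEl mxE (ord1 k).
have -> : j = rshift 1 k by apply: val_inj.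
by rewrite row_mxEr; have := h2 ord0 k; rewrite mxE.
Qed.

Lemma indic_row_mx n (c : 'rV[R]_(1 + n)) (r : R) (y0 : R) (z : 'rV[R]_n) :
  \1_(ball c r) (row_mx (const_mx y0 : 'rV[R]_1) z) =
  \1_(ball (c ord0 (lshift n ord0)) r) y0 * \1_(ball (rsubmx c) r) z :> R.
Proof.
rewrite !indicE.
have [h|h] := pselect (ball c r (row_mx (const_mx y0 : 'rV[R]_1) z)).
  move/ball_row_mx: (h) => [h1 h2].
  by rewrite !mem_set // mulr1.
have [h1|h1] := pselect (ball (c ord0 (lshift n ord0)) r y0); last first.
  by rewrite (memNset h1) (memNset h) mul0r.
have [h2|h2] := pselect (ball (rsubmx c) r z); last first.
  by rewrite (memNset h2) (memNset h) mulr0.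
by exfalso; apply: h; apply/ball_row_mx.
Qed.

Local Open Scope ereal_scope.

Lemma int_ball (a r k : R) : (0 < r)%R -> (0 <= k)%R ->
  \int[@lebesgue_measure R]_y (k * \1_(ball a r) y)%:E = (k * (2 * r))%:E.
Proof.
move=> r0 k0.
have mb : measurable (ball a r : set R) by rewrite ball_itv; exact: measurable_itv.
have := @integralZl_indic _ _ _ (@lebesgue_measure R) setT measurableT (fun _ => ball a r) k.
move=> /(_ _ mb) -> /=; last by rewrite ltNge k0.
rewrite integral_indic; last by rewrite ball_itv; exact: measurable_itv.
rewrite setIT ball_itv.
have := @lebesgue_measure_itv R `](a - r)%R, (a + r)%R[.
move=> /= ->; rewrite lte_fin ltrD2l gtrN //.
  by rewrite -EFinD -EFinM; congr (_ * _)%:E; ring.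
exact: measurableT.
Qed.

Lemma leb_int_box n (c : 'rV[R]_n) (r k : R) : (0 < r)%R -> (0 <= k)%R ->
  leb_int (fun y => (k * \1_(ball c r) y)%:E) = (k * (2 * r) ^+ n)%:E.
Proof.
move=> r0; elim: n c k => [|n IH] c k k0 /=.
  rewrite indicE mem_set ?mulr1 ?expr0 ?mulr1 //.
  by split => // i [] [].

transitivity (\int[@lebesgue_measure R]_y
   ((k * (2 * r) ^+ n) * \1_(ball (c ord0 (@lshift 1 n ord0)) r) y)%:E).
  apply: eq_integral => y0 _.
  transitivity (leb_int (fun z : 'rV[R]_n =>
     ((k * \1_(ball (c ord0 (@lshift 1 n ord0)) r) y0) * \1_(ball (rsubmx (c : 'rV[R]_(1+n))) r) z)%:E)).
    by congr leb_int; apply: funext => z; rewrite indic_row_mx mulrA.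
  rewrite IH; last by rewrite mulr_ge0 // indicE ler0n.
  by rewrite mulrAC.
rewrite int_ball //; first by rewrite exprSr [in RHS]mulrA.
by rewrite mulr_ge0 // exprn_ge0 // mulr_ge0 // ltW.
Qed.


Lemma leb_sandwich n (c : 'rV[R]_n) (r : R) (f : 'rV[R]_n -> R) (lo hi : R) :
  (0 < r)%R -> (0 <= lo)%R -> (forall y, ball c r y -> (lo <= f y <= hi)%R) ->
  (lo * (2 * r) ^+ n)%:E <= leb_int (fun y => (\1_(ball c r) y * f y)%:E)
  <= (hi * (2 * r) ^+ n)%:E.
Proof.
move=> r0 lo0 hf.
have hi0 : (0 <= hi)%R.
  have /andP[h1 h2] := hf c (ballxx c r0).
  by rewrite (le_trans lo0) // (le_trans h1).
apply/andP; split.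
  rewrite -(@leb_int_box n c r lo) //; apply: leb_int_le => y.
    by rewrite lee_fin mulr_ge0 // indicE ler0n.
  rewrite lee_fin indicE; have [h|h] := pselect (ball c r y).
    by rewrite mem_set // mul1r mulr1; have /andP[] := hf y h.
  by rewrite memNset // !mul0r mulr0.
rewrite -(@leb_int_box n c r hi) //; apply: leb_int_le => y.
  rewrite lee_fin indicE; have [h|h] := pselect (ball c r y).
    rewrite mem_set // mul1r; have /andP[h1 _] := hf y h.
    exact: le_trans lo0 h1.
  by rewrite memNset // !mul0r.
rewrite lee_fin indicE; have [h|h] := pselect (ball c r y).
  by rewrite mem_set // mul1r mulr1; have /andP[] := hf y h.
by rewrite memNset // !mul0r mulr0.
Qed.

Lemma fine_sandwich (a b : R) (x : \bar R) : a%:E <= x <= b%:E ->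
  (a <= fine x <= b)%R.
Proof.
move=> /andP[h1 h2]; case: x h1 h2 => [x||] //= h1 h2.
by rewrite -!lee_fin h1 h2.
Qed.


Lemma shrink_cvg n (c : 'rV[R]_n) (r0 : R) (f : 'rV[R]_n -> R) :
  (0 < r0)%R -> (forall y, ball c r0 y -> (0 <= f y)%R) -> {for c, continuous f} ->
  (fun k : nat => (((2 * (r0 / k.+1%:R)) ^+ n)^-1 *
     fine (leb_int (fun y => (\1_(ball c (r0 / k.+1%:R)) y * f y)%:E)))%R)
  @ \oo --> f c.
Proof.
move=> r00 f0 cf; apply/cvgrPdist_le => e e0.
have := cf; move/cvgrPdist_lt/(_ e e0)/nbhs_ballP => [del /= del0 hdel].
exists (Num.Def.trunc (r0 / del)) => // k /= hk.
set rk := (r0 / k.+1%:R)%R.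
have rk0 : (0 < rk)%R by rewrite divr_gt0.
have rkr0 : (rk <= r0)%R.
  by rewrite ler_pdivrMr // ler_peMr ?(ltW r00) // ler1n.
have rkdel : (rk < del)%R.
  rewrite ltr_pdivrMr // mulrC -ltr_pdivrMr //.
  apply: lt_le_trans (truncnS_gt _) _; rewrite ler_nat; exact: hk.
set lo := Num.max 0%R (f c - e)%R.
have lo0 : (0 <= lo)%R by rewrite le_max lexx.
have hyp : forall y, ball c rk y -> (lo <= f y <= f c + e)%R.
  move=> y by_; have := hdel y (le_ball (ltW rkdel) by_) => /=.
  rewrite ltr_distlC => /andP[h1 h2]; rewrite ge_max f0 ?(ltW h1) ?(ltW h2) //.
  by apply: (le_ball rkr0).

have := fine_sandwich _ _ _ (@leb_sandwich n c rk f lo (f c + e)%R rk0 lo0 hyp).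
set L := fine _; move=> /andP[h1 h2].
have v0 : (0 < (2 * rk) ^+ n)%R by rewrite exprn_gt0 // mulr_gt0.
rewrite ler_distlC; apply/andP; split.
  rewrite ler_pdivlMl //.
  apply: le_trans h1; rewrite mulrC ler_wpM2r ?(ltW v0) //.
  by rewrite /lo le_max lexx orbT.
by rewrite mulrC ler_pdivrMr.
Qed.

End L2.
Section B.
Variable R : realType.

Lemma open_borel (T : topologicalType) (A : set T) : open A -> borel_set A.
Proof. by move=> oA; apply: sub_sigma_algebra. Qed.

Lemma borel_sigma (T : topologicalType) : sigma_algebra [set: T] (@borel_set T).
Proof. exact: smallest_sigma_algebra. Qed.

Lemma borel_preimage (T U : topologicalType) (f : T -> U) : continuous f ->
  forall B, borel_set B -> borel_set (f @^-1` B).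
Proof.
move=> cf B hB.
apply: (@smallest_sub _ (sigma_algebra [set: U]) _ [set B | borel_set (f @^-1` B)] _ _ B hB).
  split.
  - by rewrite /= preimage_set0; exact: sigma_algebra0.
  - move=> A /= hA.
    exact: sigma_algebraCD.
  - move=> F hF /=; rewrite preimage_bigcup; exact: sigma_algebra_bigcup.
move=> A oA /=; apply: open_borel; apply: open_comp => // x _; exact: cf.
Qed.

Lemma measurableR_borel (A : set R) : measurable A -> borel_set A.
Proof.
move=> h; apply: (@smallest_sub _ (sigma_algebra [set: R]) _ (@borel_set R) _ _ A h).
  exact: borel_sigma.
move=> _ [[a b] _ <-] /=.
have -> : `]a, b]%classic = [set: R] `\` (([set: R] `\` `]a, +oo[%classic) `|` `]b, +oo[%classic).
  apply/seteqP; split => x /=; rewrite !in_itv /= ?andbT.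
    move=> /andP[h1 h2]; split => // -[[_ /negP]|]; first by rewrite h1.
    by apply/negP; rewrite -leNgt.
  move=> [_ /not_orP[/not_andP[//|/contrapT h1] /negP h2]].
  by rewrite h1 leNgt h2.
apply: sigma_algebraCD.
have -> : forall X Y : set R, X `|` Y = \bigcup_(n : nat) (if n == 0%N then X else Y).
  move=> X Y; apply/seteqP; split => x.
    by case=> hh; [exists 0%N|exists 1%N].
  by case=> -[|n] _ /= hh; [left|right].
apply: sigma_algebra_bigcup => -[|n] /=.
  apply: sigma_algebraCD; apply: open_borel; exact: itv_open_ends_open.
apply: open_borel; exact: itv_open_ends_open.
Qed.

Lemma borel_indic (T : topologicalType) (A : set T) : borel_set A ->
  borel_on [set: T] (\1_A : T -> R).
Proof.
move=> hA B _; rewrite setTI.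
have [h1|h1] := pselect (B 1); have [h0|h0] := pselect (B 0).
- have -> : (\1_A : T -> R) @^-1` B = [set: T].
    by apply/seteqP; split => x //= _; rewrite indicE; case: (x \in A).
  by rewrite -(setD0 [set: T]); apply: sigma_algebraCD; exact: sigma_algebra0.
- have -> : (\1_A : T -> R) @^-1` B = A.
    apply/seteqP; split => x /=; rewrite indicE.
      by have [/set_mem //|_] := boolP (x \in A).
    by move=> xA; rewrite mem_set.
  exact: hA.
- have -> : (\1_A : T -> R) @^-1` B = [set: T] `\` A.
    apply/seteqP; split => x /=; rewrite indicE.
      by have [//|/negP xA] := boolP (x \in A); split => // /mem_set.
    by move=> [_ xA]; rewrite memNset.
  exact: sigma_algebraCD.
- have -> : (\1_A : T -> R) @^-1` B = set0.
    by apply/seteqP; split => x //=; rewrite indicE; case: (x \in A).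
  exact: sigma_algebra0.
Qed.

Lemma meas_comp d (Om : measurableType d) (n : nat) (Y : Om -> 'rV[R]_n)
  (phi : 'rV[R]_n -> R) :
  (forall A, borel_set A -> measurable (Y @^-1` A)) ->
  borel_on [set: 'rV[R]_n] phi -> measurable_fun [set: Om] (fun w => phi (Y w)).
Proof.
move=> hY hphi _ B mB; rewrite setTI.
have := hY _ (hphi B (measurableR_borel B mB)).
by rewrite setTI.
Qed.

End B.
Section C. Variable R : realType. Variable d : nat.
Lemma c2 (u : R) : continuous (fun x : 'rV[R]_d => (u, x)).
Proof. move=> y. have h1 : (fun _ : 'rV[R]_d => u) @ y --> u.
  apply: cvg_cst. exact: (@nbhs_filter _ (y : 'rV[R]_d)).
have h2 : (fun x : 'rV[R]_d => x) @ y --> y.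
  apply: cvg_id.
apply: (cvg_pair h1 h2).
Qed.
Lemma c3 (u T : R) (xi : 'rV[R]_d): continuous (fun x : 'rV[R]_d => ((u, x), (T,xi))).
Proof. move=> y. have h1 : (fun _ : 'rV[R]_d => (T,xi)) @ y --> (T,xi).
  apply: cvg_cst. exact: (@nbhs_filter _ (y : 'rV[R]_d)).
apply: (cvg_pair (c2 u y) h1).
Qed.
End C.

Section D.
Variable R : realType.
Lemma cvg_EFin_seq (u : nat -> R) (l : R) :
  u @ \oo --> l -> (fun k => (u k)%:E) @ \oo --> l%:E.
Proof. by move=> h; apply: cvg_EFin => //; exact: nearW. Qed.
End D.
Theorem mainTheorem10
  (R : realType) (d p0 : nat) (T0 : R) (B : 'M[R]_d)
  (dO : measure_display) (Omega : measurableType dO)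
  (F : R -> R -> set (set Omega)) (X : R -> Omega -> 'rV[R]_d)
  (P : R -> 'rV[R]_d -> probability Omega R)
  (D : set 'rV[R]_d)
  (a : 'I_d -> 'I_d -> R * 'rV[R]_d -> R) (b : 'I_d -> R * 'rV[R]_d -> R)
  (N : nat) (alpha M : R)
  (Gamma : R -> 'rV[R]_d -> R -> 'rV[R]_d -> R) :
  (* standing setting *)
  0 < T0 -> (1 <= p0)%N -> (p0 <= d)%N ->
  (* D is a domain *)
  open D -> connected D -> D !=set0 ->
  (* coefficients: symmetric, in L^oo_loc([0,T0[ x D) *)
  (forall i j z, a i j z = a j i z) ->
  (forall K : set (R * 'rV[R]_d), compact K ->
     K `<=` [set z | 0 <= z.1 < T0 /\ D z.2] ->
     exists C : R, forall z, K z ->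
       (forall i j : 'I_d, `|a i j z| <= C) /\ (forall i : 'I_d, `|b i z| <= C)) ->
  (forall i j : 'I_d,
     borel_on [set z : R * 'rV[R]_d | 0 <= z.1 < T0 /\ D z.2] (a i j)) ->
  (forall i : 'I_d,
     borel_on [set z : R * 'rV[R]_d | 0 <= z.1 < T0 /\ D z.2] (b i)) ->
  (* Assumption (H) *)
  hoermander p0 B ->
  (* Assumption (R) *)
  0 < alpha <= 1 -> 0 < M ->
  (forall i j : 'I_d, (i < p0)%N -> (j < p0)%N ->
     CnB_M p0 B [set z | 0 < z.1 < T0 /\ D z.2] alpha M N (a i j)) ->
  (forall i : 'I_d, (i < p0)%N ->
     CnB_M p0 B [set z | 0 < z.1 < T0 /\ D z.2] alpha M N (b i)) ->
  (forall z : R * 'rV[R]_d, 0 < z.1 < T0 -> D z.2 ->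
     forall xi : 'I_d -> R,
       M^-1 * (\sum_(i < d | (i < p0)%N) xi i ^+ 2)
         <= \sum_(i < d | (i < p0)%N) \sum_(j < d | (j < p0)%N) a i j z * xi i * xi j
       /\ \sum_(i < d | (i < p0)%N) \sum_(j < d | (j < p0)%N) a i j z * xi i * xi j
         <= M * (\sum_(i < d | (i < p0)%N) xi i ^+ 2)) ->
  (* Assumption (F) *)
  (forall (T : R) (phi : 'rV[R]_d -> R), 0 < T < T0 ->
     bdd_fun phi -> continuous phi ->
     {within [set z : R * 'rV[R]_d | 0 < z.1 < T /\ D z.2],
        continuous (fun z => Eval X P z.1 z.2 T phi)}) ->
  (* X is a continuous strong Markov process, local diffusion generated by A_t on D *)
  cont_strong_Markov T0 F X P ->
  local_diffusion T0 X P p0 B D a b ->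
  (* Gamma is its local transition density on D *)
  (forall t T x y, 0 < t -> t < T -> T < T0 -> D y -> 0 <= Gamma t x T y) ->
  borel_on [set u : (R * 'rV[R]_d) * (R * 'rV[R]_d) |
              0 < u.1.1 /\ u.1.1 < u.2.1 /\ u.2.1 < T0 /\ D u.2.2]
           (fun u => Gamma u.1.1 u.1.2 u.2.1 u.2.2) ->
  (forall t T x (A : set 'rV[R]_d), 0 < t -> t < T -> T < T0 ->
     borel_set A -> A `<=` D ->
     P t x (X T @^-1` A) = leb_int (fun y => (\1_A y * Gamma t x T y)%:E)) ->
  (forall t T x y, 0 < t -> t < T -> T < T0 -> D y ->
     {for y, continuous (Gamma t x T)}) ->
  (forall t T (K : set 'rV[R]_d), 0 < t -> t < T -> T < T0 ->
     compact K -> K `<=` D ->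
     exists C : R, forall x y, K y -> Gamma t x T y <= C) ->
  (* conclusion *)
  forall t T xi, 0 < t -> t < T -> T < T0 -> D xi ->
    (exists C : R, forall x, `|Gamma t x T xi| <= C) /\
    borel_on [set: 'rV[R]_d] (fun x => Gamma t x T xi) /\
    (forall s x, t < s -> s < T ->
       ((Gamma t x T xi)%:E = \int[P t x]_w (Gamma s (X s w) T xi)%:E)%E).
Proof.
move=> T0pos p01 p0d oD cD D0 asym aloc ameas bmeas hH al M0 areg breg aell HF HM
  Hloc G0 Gm Gdens Gcont Gbd t T xi t0 tT TT0 Dxi.
case: HM => Hfilt [Hmono1 [Hmono2 [Hadapt [Hpath [Hinit [Htransm Hsmp]]]]]].
have Gsec : forall u, 0 < u -> u < T -> borel_on [set: 'rV[R]_d] (fun x => Gamma u x T xi).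
  move=> u u0 uT A hA; rewrite setTI.
  pose sig := fun x : 'rV[R]_d => ((u, x), (T, xi)).
  have csig : continuous sig := @c3 R d u T xi.
  have := borel_preimage _ _ sig csig _ (Gm A hA).
  congr borel_set; apply/seteqP; split => y /=; first by case.
  by move=> h; do ?split.
split.
  have KD1 : [set xi] `<=` D by move=> y ->.
  have [C hC] := Gbd t T [set xi] t0 tT TT0 (@compact_set1 _ xi) KD1.
  by exists C => y; rewrite ger0_norm; [exact: hC | exact: G0].
split; first exact: Gsec t t0 tT.
move=> s x ts sT.
have s0 : 0 < s by exact: lt_trans ts.
have [r0 r00 hr0] : exists2 r0 : R, 0 < r0 & ball xi r0 `<=` D.
  have : nbhs xi D by apply: open_nbhs_nbhs; split.
  by move/nbhs_ballP => [r0 /= r00 h]; exists r0.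
pose r1 := r0 / 2.
have r10 : 0 < r1 by rewrite divr_gt0.
pose K := [set v : 'rV[R]_d | forall i, `[xi ord0 i - r1, xi ord0 i + r1]%classic (v ord0 i)].
have Kc : compact K.
  apply: (@rV_compact _ _ (fun i => `[xi ord0 i - r1, xi ord0 i + r1]%classic)).
  by move=> i; exact: segment_compact.
have KD : K `<=` D.
  move=> v Kv; apply: hr0; split => // i j; rewrite (ord1 i) /ball /=.
  have := Kv j; rewrite /= in_itv /= -ler_distlC => h; apply: le_lt_trans h _.
  by rewrite /r1 ltr_pdivrMr // ltr_pMr // ltr1n.
have ballK : forall r, r <= r1 -> ball xi r `<=` K.
  move=> r rr1 v [_ hv] i; have := hv ord0 i; rewrite /ball /= => h.
  rewrite /= in_itv /= -ler_distlC; exact: le_trans (ltW h) rr1.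
have [C hC] := Gbd s T K s0 sT TT0 Kc KD.
pose rk (k : nat) := r1 / k.+1%:R.
have rk0 : forall k, 0 < rk k by move=> k; rewrite divr_gt0.
have rkr1 : forall k, rk k <= r1.
  by move=> k; rewrite ler_pdivrMr // ler_peMr ?(ltW r10) // ler1n.
have Abor : forall k, borel_set (ball xi (rk k)).
  by move=> k; apply: open_borel; exact: ball_open.
have AD : forall k, ball xi (rk k) `<=` D.
  by move=> k y h; apply: KD; exact: (ballK _ (rkr1 k)).
have E1 : forall u y k, 0 < u -> u < T ->
    trans X P u y T (ball xi (rk k)) =
    fine (leb_int (fun z => (\1_(ball xi (rk k)) z * Gamma u y T z)%:E)).
  by move=> u y k u0 uT; rewrite /trans (Gdens u T y _ u0 uT TT0 (Abor k) (AD k)).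
have Hmeas : forall a1 b1, 0 <= a1 <= b1 -> b1 < T0 ->
    forall A, borel_set A -> measurable (X b1 @^-1` A).
  move=> a1 b1 hab hb A hA; have [_ sub] := Hfilt a1 b1 hab hb.
  by apply: sub; exact: Hadapt a1 b1 hab hb A hA.
have intind : forall u y A, 0 <= u <= T -> borel_set A ->
    (\int[P u y]_w (\1_A (X T w))%:E = P u y (X T @^-1` A))%E.
  move=> u y A hu hA.
  rewrite -[X in P u y X]setIT -integral_indic //; exact: Hmeas u T hu TT0 A hA.
have Fset : forall a1 b1, 0 <= a1 <= b1 -> b1 < T0 -> F a1 b1 setT /\ F a1 b1 set0.
  move=> a1 b1 hab hb; have [[h0 hC' _] _] := Hfilt a1 b1 hab hb.
  by split => //; rewrite -(setD0 [set: Omega]); apply: hC'.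
have tT' : 0 <= t <= T by rewrite (ltW t0) (ltW tT).
have sT' : 0 <= s <= T by rewrite (ltW s0) (ltW sT).
have Fs : forall s', t <= s' <= T -> F t s' [set w : Omega | s <= s'].
  move=> s' /andP[ts' s'T].
  have ts's : 0 <= t <= s' by rewrite (ltW t0) ts'.
  have s'T0 : s' < T0 by exact: le_lt_trans s'T TT0.
  have [h1 h2] := Fset t s' ts's s'T0.
  case: (leP s s') => hss.
    by have -> : [set w : Omega | true] = setT by apply/seteqP; split.
  by have -> : [set w : Omega | false] = set0 by apply/seteqP; split.
have stop : stopping_time F t T (fun _ => s).
  by split; [move=> _; rewrite (ltW ts) (ltW sT) | exact: Fs].
have Ftau : F_tau F t T (fun _ => s) setT.
  split; first by have [] := Fset t T tT' TT0.
  by move=> s' hs'; rewrite setTI; exact: Fs.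
have CK : forall k, ((trans X P t x T (ball xi (rk k)))%:E =
    \int[P t x]_w (trans X P s (X s w) T (ball xi (rk k)))%:E)%E.
  move=> k; set Ak := ball xi (rk k).
  have bdd : bdd_fun (\1_Ak : 'rV[R]_d -> R).
    by exists 1 => z; rewrite indicE; case: (_ \in _); rewrite ?normr1 ?normr0.
  have := Hsmp t T x (fun _ => s) (\1_Ak) tT' TT0 stop (@borel_indic R _ Ak (Abor k)) bdd setT Ftau.
  rewrite (intind t x Ak tT' (Abor k)) => eq.
  rewrite /trans fineK; last exact: fin_num_measure (Hmeas t T tT' TT0 Ak (Abor k)).
  rewrite eq; apply: eq_integral => w _.
  by rewrite /Eval (intind s (X s w) Ak sT' (Abor k)).
pose v (k : nat) := ((2 * rk k) ^+ d)^-1.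
have v0 : forall k, 0 < v k.
  by move=> k; rewrite invr_gt0 exprn_gt0 // mulr_gt0 // rk0.
pose fk (k : nat) (w : Omega) := ((v k * trans X P s (X s w) T (ball xi (rk k)))%:E)%E.
pose f (w : Omega) := ((Gamma s (X s w) T xi)%:E)%E.
have ts0 : 0 <= t <= s by rewrite (ltW t0) (ltW ts).
have mXs : forall A, borel_set A -> measurable (X s @^-1` A).
  exact: Hmeas t s ts0 (lt_trans sT TT0).
have mtr : forall k, measurable_fun setT (fun w => trans X P s (X s w) T (ball xi (rk k))).
  move=> k; apply: (@meas_comp R _ Omega d (X s) (fun y => trans X P s y T (ball xi (rk k))) mXs).
  exact: Htransm s T _ sT' TT0 (Abor k).
have mfk : forall k, measurable_fun (U := measurable_realfun.constructive_ereal_extended__canonical__measurable_structure_SigmaRing R) setT (fk k).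
  by move=> k; apply/measurable_EFinP; apply: measurable_funM => //.
have mf : measurable_fun (U := measurable_realfun.constructive_ereal_extended__canonical__measurable_structure_SigmaRing R) setT f.
  apply/measurable_EFinP; exact: (@meas_comp R _ Omega d (X s) (fun y => Gamma s y T xi) mXs (Gsec s s0 sT)).
have Gnn : forall u y z, 0 < u -> u < T -> ball xi r1 z -> 0 <= Gamma u y T z.
  by move=> u y z u0 uT hz; apply: G0 => //; apply: KD; exact: (ballK r1 (lexx _)).
have ff : forall w, setT w -> fk ^~ w @ \oo --> f w.
  move=> w _.
  have := @shrink_cvg R d xi r1 (fun z => Gamma s (X s w) T z) r10
    (fun z hz => Gnn s (X s w) z s0 sT hz) (Gcont s T (X s w) xi s0 sT TT0 Dxi).
  move/cvg_EFin_seq.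
  have -> : fk ^~ w = (fun k => (v k * fine (leb_int (fun z => (\1_(ball xi (rk k)) z * Gamma s (X s w) T z)%:E)))%:E)%E.
    by apply: funext => k; rewrite /fk (E1 s (X s w) k s0 sT).
  by [].
have absfg : forall k w, setT w -> (`|fk k w| <= C%:E)%E.
  move=> k w _; rewrite /fk (E1 s (X s w) k s0 sT).
  have hyp : forall y, ball xi (rk k) y -> 0 <= Gamma s (X s w) T y <= C.
    move=> y hy; apply/andP; split.
      by apply: G0 => //; exact: AD k y hy.
    by apply: hC; exact: (ballK _ (rkr1 k)).
  have := fine_sandwich _ _ _ _ (@leb_sandwich R d xi (rk k) (Gamma s (X s w) T) 0 C (rk0 k) (lexx 0) hyp).
  set L := fine _; rewrite mul0r => /andP[L0 LC].
  rewrite abse_EFin lee_fin ger0_norm; last by rewrite mulr_ge0 // ltW // v0.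
  by rewrite /v mulrC ler_pdivrMr // exprn_gt0 // mulr_gt0 // rk0.
have ig : (P t x).-integrable setT (fun _ => C%:E).
  exact: (finite_measure_integrable_cst (P t x) C measurableT).
have Hd := dominated_cvg measurableT mfk ff (fun (_ : Omega) _ => isT : (C%:E \is a fin_num)%E) ig absfg.
have eqk : forall k, (\int[P t x]_w fk k w =
    (v k * fine (leb_int (fun z => (\1_(ball xi (rk k)) z * Gamma t x T z)%:E)))%:E)%E.
  move=> k; rewrite /fk.
  under eq_integral do rewrite EFinM.
  rewrite ge0_integralZl_EFin //; last 2 first.
  - by apply/measurable_EFinP; exact: mtr k.
  - exact: ltW (v0 k).
  - by rewrite -CK -EFinM (E1 t x k t0 tT).
  - by move=> w _; rewrite lee_fin /trans fine_ge0 // measure_ge0.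
have Hl : (fun k => \int[P t x]_w fk k w)%E @ \oo --> (Gamma t x T xi)%:E.
  rewrite (funext eqk); apply: cvg_EFin_seq.
  have Gnt : forall z, ball xi r1 z -> 0 <= Gamma t x T z.
    by move=> z hz; exact: Gnn t x z t0 tT hz.
  exact: (@shrink_cvg R d xi r1 (fun z => Gamma t x T z) r10 Gnt (Gcont t T x xi t0 tT TT0 Dxi)).
exact: (@cvg_unique _ (@ereal_hausdorff R) _ _ _ _ Hl Hd).
Qed.
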